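(* Let $T$ be a tree (without loops), $v$ a vertex of $T$ with neighbours $w_1,\dots,w_s$, and let $T_i$ be the connected component of $T\setminus v$ containing $w_i$. Then $\nu_2(T)-\nu_2(T\setminus v)\in\{0,1,2\}$ and: (i) $\nu_2(T)-\nu_2(T\setminus v)=2$ if and only if $v$ is saturated in $T$; (ii) $\nu_2(T)-\nu_2(T\setminus v)=1$ if and only if there exists $1\leq j\leq s$ such that the edge $vw_j$ is saturated in $T$ and $w_i$ is saturated in $T_i$ for all $i\neq j$; (iii) $\nu_2(T)-\nu_2(T\setminus v)=0$ if and only if $w_i$ is saturated in $T_i$ for all $1\leq i\leq s$.
   Context: A $2$-matching of a graph $G$ is a set of edges such that every vertex is incident to at most two of them; $\nu_2(G)$ is the maximum size of a $2$-matching and a $2$-matching of that size is called maximum. A vertex $w$ is saturated in $G$ if every maximum $2$-matching of $G$ has exactly two edges incident to $w$; an edge is saturated in $G$ if it belongs to every maximum $2$-matching of $G$. $T\setminus v$ denotes $T$ with the vertex $v$ and its incident edges deleted. *)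

(* Defs.v *)
(* Simple graphs on a finType V given by a symmetric,
   irreflexive relation e; subgraphs are induced subgraphs on a vertex set S. *)
From mathcomp Require Import all_boot.
Set Implicit Arguments. Unset Strict Implicit. Unset Printing Implicit Defensive.

Section Graphs.
Variables (V : finType) (e : rel V).

Definition edges_in (S : {set V}) : {set {set V}} :=
  [set f : {set V} | [exists x, exists y,
     [&& f == [set x; y], e x y, x \in S & y \in S]]].

Definition deg_in (F : {set {set V}}) (x : V) : nat := #|[set f in F | x \in f]|.

Definition is_2matching (S : {set V}) (F : {set {set V}}) : bool :=
  (F \subset edges_in S) && [forall x, deg_in F x <= 2].

Definition nu2 (S : {set V}) : nat :=
  \max_(F : {set {set V}} | is_2matching S F) #|F|.

Definition max_2matching (S : {set V}) (F : {set {set V}}) : bool :=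
  is_2matching S F && (#|F| == nu2 S).

Definition vsaturated (S : {set V}) (w : V) : Prop :=
  forall F, max_2matching S F -> deg_in F w = 2.

Definition esaturated (S : {set V}) (f : {set V}) : Prop :=
  forall F, max_2matching S F -> f \in F.

Definition is_tree : Prop :=
  (forall x y, connect e x y) /\
  (forall c : seq V, 3 <= size c -> ~~ ucycleb e c).

Definition rdel (v : V) : rel V := [rel x y | [&& x != v, y != v & e x y]].

Definition comp_del (v w : V) : {set V} := [set x | connect (rdel v) w x].

End Graphs.

(* Main.v *)
Require Import Defs.
From mathcomp Require Import all_boot.
From mathcomp Require Import zify.
Set Implicit Arguments. Unset Strict Implicit. Unset Printing Implicit Defensive.


Section L.
Variables (V : finType) (e : rel V).
Hypothesis esym : symmetric e.
Hypothesis eirr : irreflexive e.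

Lemma edgesP (S : {set V}) f : reflect (exists x y, [/\ f = [set x; y], e x y, x \in S & y \in S])
  (f \in edges_in e S).
Proof.
rewrite inE; apply: (iffP existsP) => [[x /existsP [y /and4P [/eqP ? ? ? ?]]]|[x [y [? ? ? ?]]]].
  by exists x, y.
by exists x; apply/existsP; exists y; apply/and4P; split => //; apply/eqP.
Qed.

Lemma edges_mem (S : {set V}) f z : f \in edges_in e S -> z \in f -> z \in S.
Proof. by move=> /edgesP [x [y [-> _ Hx Hy]]] /set2P [] ->. Qed.

Lemma edges_mono (S S' : {set V}) : S \subset S' -> edges_in e S \subset edges_in e S'.
Proof.
move=> sS; apply/subsetP => f /edgesP [x [y [-> Hxy Hx Hy]]]; apply/edgesP.
by exists x, y; split => //; apply: (subsetP sS).
Qed.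

Lemma set2_inj (v : V) : injective (fun x => [set v; x]).
Proof.
move=> x y /= H.
have : x \in [set v; y] by rewrite -H !inE eqxx orbT.
rewrite !inE => /orP [/eqP xv|/eqP //].
have : y \in [set v; x] by rewrite H !inE eqxx orbT.
by rewrite !inE xv orbb => /eqP.
Qed.

Lemma edge_vw (S : {set V}) (v w : V) : [set v; w] \in edges_in e S -> e v w.
Proof.
move=> /edgesP [x [y [H Hxy _ _]]].
have : v \in [set x; y] by rewrite -H !inE eqxx.
have : w \in [set x; y] by rewrite -H !inE eqxx orbT.
rewrite !inE => /orP [] /eqP ? /orP [] /eqP ?; subst; rewrite 1?esym //.
- have : y \in [set x; x] by rewrite H !inE eqxx orbT.
  by rewrite !inE orbb => /eqP yx; rewrite yx eirr in Hxy.
- by rewrite esym.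
- have : x \in [set y; y] by rewrite H !inE eqxx.
  by rewrite !inE orbb => /eqP yx; rewrite yx eirr in Hxy.
Qed.

Lemma deg_vert (S : {set V}) (M : {set {set V}}) (v : V) : M \subset edges_in e S ->
  deg_in M v = #|[set x | [set v; x] \in M]|.
Proof.
move=> sM; rewrite /deg_in -(card_imset _ (@set2_inj v)); apply: eq_card => f; rewrite inE; apply/andP/imsetP.
  move=> [fM vf]; have := subsetP sM _ fM => /edgesP [x [y [Hf _ _ _]]].
  move: vf; rewrite Hf !inE => /orP [] /eqP Hv; subst.
    by exists y; rewrite // inE.
  by exists x; rewrite ?inE setUC.
by move=> [x]; rewrite inE => Hx ->; rewrite Hx !inE eqxx.
Qed.

Lemma nu2_ge (S : {set V}) (F : {set {set V}}) : is_2matching e S F -> #|F| <= nu2 e S.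
Proof. by move=> H; apply: (@leq_bigmax_cond _ (is_2matching e S) (fun F => #|F|)). Qed.

Lemma nu2_max (S : {set V}) : exists F, max_2matching e S F.
Proof.
have : 0 < #|is_2matching e S|.
  apply/card_gt0P; exists set0; rewrite unfold_in /is_2matching sub0set /=.
  apply/forallP => x; rewrite /deg_in; apply: (@leq_trans 0) => //.
  by rewrite leqn0 cards_eq0; apply/eqP/setP => f; rewrite !inE.
move=> /(eq_bigmax_cond (fun F : {set {set V}} => #|F|)) [F HF Heq].
exists F; apply/andP; split; first by move: HF; rewrite unfold_in.
by apply/eqP; rewrite /nu2 -Heq.
Qed.

End L.


Section C.
Variables (V : finType) (e : rel V) (v : V).
Hypothesis esym : symmetric e.
Hypothesis eirr : irreflexive e.
Hypothesis etree : is_tree e.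

Lemma path_nv (w : V) p : path (rdel e v) w p -> all (fun y => y != v) p.
Proof.
elim: p w => [//|y p IH] w /= /andP [/and3P [_ yv _] Hp].
by rewrite yv (IH y).
Qed.

Lemma comp_nv w x : w != v -> x \in comp_del e v w -> x != v.
Proof.
move=> wv; rewrite inE => /connectP [p Hp ->].
case: (lastP p) Hp => [//|q y] Hp; rewrite last_rcons.
by have := path_nv Hp; rewrite all_rcons => /andP [].
Qed.

Lemma comp_w w : w \in comp_del e v w.
Proof. by rewrite inE connect0. Qed.

Lemma comp_edge w x y : w != v -> x \in comp_del e v w -> e x y -> y != v ->
  y \in comp_del e v w.
Proof.
move=> wv Hx Hxy yv; move: (Hx); rewrite !inE => Hc.
apply: connect_trans Hc (connect1 _).
by apply/and3P; split => //; apply: comp_nv Hx.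
Qed.

Lemma comp_adj w x : e v w -> x \in comp_del e v w -> e v x -> x = w.
Proof.
move=> evw Hx evx; apply/eqP; apply/negPn/negP => xw.
have wv : w != v by apply/negP => /eqP wv; rewrite wv eirr in evw.
move: Hx; rewrite inE => /connectP [p Hp Hl].
case: (shortenP Hp) Hl => p' Hp' Hu _ Hl.
case: etree => _ /(_ (v :: w :: p')).
have p'n : p' != [::] by apply/eqP => pn; rewrite pn /= in Hl; rewrite Hl eqxx in xw.
rewrite /= ltnS; case: p' p'n Hp' Hu Hl => [//|y p''] _ Hp' Hu Hl.
move=> /(_ isT); rewrite /ucycleb /=.
have h1 : path e w (y :: p'') by apply: sub_path Hp' => a b /and3P [].
have h2 : e (last w (y :: p'')) v by rewrite -Hl esym.
have h3 : v \notin [:: w, y & p''].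
  have := path_nv Hp'; rewrite /= => /andP [yv Hall].
  rewrite !inE !negb_or eq_sym wv eq_sym yv /=.
  apply/negP => vp; move/allP: Hall => /(_ v vp); by rewrite eqxx.
have h4 : path e w (rcons (y :: p'') v) by rewrite rcons_path h1 h2.
move: h4 Hu; rewrite evw /= => /andP [-> ->] /and3P [-> -> ->].
by rewrite h3.
Qed.

End C.


Lemma cardsU_le (T : finType) (A B : {set T}) : #|A :|: B| <= #|A| + #|B|.
Proof. by rewrite cardsU leq_subr. Qed.

Lemma cardsU_disj (T : finType) (A B : {set T}) :
  (forall x, x \in A -> x \notin B) -> #|A :|: B| = #|A| + #|B|.
Proof.
move=> H; rewrite cardsU (_ : A :&: B = set0) ?cards0 ?subn0 //.
by apply/setP => x; rewrite !inE; apply/andP => [[/H /negP]].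
Qed.

Section D.
Variables (V : finType) (e : rel V) (v : V).
Hypothesis esym : symmetric e.
Hypothesis eirr : irreflexive e.
Hypothesis etree : is_tree e.

Definition Ew w := locked (edges_in e (comp_del e v w) :|: [set [set v; w]]).

Lemma EwE w f : (f \in Ew w) = (f \in edges_in e (comp_del e v w)) || (f == [set v; w]).
Proof. by rewrite /Ew -lock in_setU in_set1. Qed.

Lemma wnv w : e v w -> w != v.
Proof. by move=> evw; apply/negP => /eqP wv; rewrite wv eirr in evw. Qed.

Lemma vnC w : e v w -> v \notin comp_del e v w.
Proof. by move=> evw; apply/negP => /(comp_nv (wnv evw)); rewrite eqxx. Qed.

Lemma edge_inC w f x : e v w -> f \in edges_in e [set: V] -> x \in comp_del e v w ->
  x \in f -> f \in Ew w.
Proof.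
move=> evw /edgesP [a [b [-> eab _ _]]] Hx xf.
wlog xa : a b eab xf / x = a.
  move=> Hw; case/set2P: (xf) => xab; first exact: Hw.
  rewrite setUC; apply: Hw => //; first by rewrite esym.
  by rewrite setUC.
subst a; rewrite EwE.
case: (eqVneq b v) => [bv|bv].
  subst b; have evx : e v x by rewrite esym.
  have aw := comp_adj esym eirr etree evw Hx evx.
  by subst x; rewrite setUC eqxx orbT.
apply/orP; left; apply/edgesP; exists x, b; split => //.
exact: comp_edge (wnv evw) Hx eab bv.
Qed.

Lemma notin_edgesC w x : e v w -> [set v; x] \notin edges_in e (comp_del e v w).
Proof.
move=> evw; apply/negP => H; have := @edges_mem _ e _ _ v H.
by rewrite in_set2 eqxx (negbTE (vnC evw)) => /(_ isT).
Qed.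

Lemma exch w (M F : {set {set V}}) (b : bool) : e v w ->
  is_2matching e [set: V] M -> is_2matching e (comp_del e v w) F ->
  (b -> [&& deg_in F w <= 1, [set v; w] \notin M & deg_in M v <= 1]) ->
  let M' := ((M :\: Ew w) :|: F) :|: (if b then [set [set v; w]] else set0) in
  [/\ is_2matching e [set: V] M', #|M'| = #|M :\: Ew w| + #|F| + b &
     forall x, ([set v; x] \in M') = (if x == w then b else [set v; x] \in M)].
Proof.
move=> evw /andP [sM /forallP dM] /andP [sF /forallP dF] Hb M'; rewrite {}/M'.
have wC := comp_w e v w.
have vC := vnC evw.
have FE : forall f, f \in F -> f \in Ew w by move=> f fF; rewrite EwE (subsetP sF).
have vwE : [set v; w] \in Ew w by rewrite EwE eqxx orbT.
have vwF : [set v; w] \notin F.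
  by apply/negP => /(subsetP sF); apply/negP; apply: notin_edgesC.
split.
- apply/andP; split.
    apply/subsetP => f; rewrite !in_setU in_setD => /orP [/orP [/andP [_ /(subsetP sM) //]|]|].
      move=> /(subsetP sF) fE; exact: (subsetP (@edges_mono _ e _ _ (subsetT _))) fE.
    case: b Hb => //=; [move=> _; rewrite in_set1 => /eqP ->; apply/edgesP | by rewrite in_set0].
    by exists v, w; split; rewrite ?in_setT.
  apply/forallP => x; rewrite /deg_in.
  case: (boolP (x \in comp_del e v w)) => xC.
    have H1 : [set f in ((M :\: Ew w) :|: F) :|: (if b then [set [set v; w]] else set0) | x \in f] \subset [set f in F | x \in f] :|:
                (if b && (x == w) then [set [set v; w]] else set0).
      apply/subsetP => f; rewrite !inE => /andP [/orP [/orP [/andP [fE fM]|fF]|fb] xf].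
      + by rewrite (edge_inC evw (subsetP sM _ fM) xC xf) in fE.
      + by rewrite fF xf.
      + move: fb; case: b {Hb} => /=; last by rewrite inE.
        rewrite inE => /eqP fvw; subst f.
        move: xf; rewrite !inE => /orP [/eqP xv|->]; last by rewrite inE eqxx orbT.
        by subst x; rewrite xC in vC.
    apply: leq_trans (subset_leq_card H1) _; apply: leq_trans (cardsU_le _ _) _.
    case: b Hb {H1} => [/(_ isT) /andP [Fw _]|_] /=.
      case: eqP => [->|_]; first by rewrite cards1 addn1.
      by rewrite cards0 addn0; apply: dF.
    by rewrite cards0 addn0; apply: dF.
  have H1 : [set f in ((M :\: Ew w) :|: F) :|: (if b then [set [set v; w]] else set0) | x \in f] \subset [set f in M | x \in f] :|:
                (if b && (x == v) then [set [set v; w]] else set0).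
    apply/subsetP => f; rewrite !inE => /andP [/orP [/orP [/andP [fE fM]|fF]|fb] xf].
    + by rewrite fM xf.
    + by rewrite (edges_mem (subsetP sF _ fF) xf) in xC.
    + move: fb; case: b {Hb} => /=; last by rewrite inE.
        rewrite inE => /eqP fvw; subst f.
      move: xf; rewrite !inE => /orP [/eqP xv|/eqP xw]; first by rewrite xv eqxx inE eqxx orbT.
      by subst x; rewrite wC in xC.
  apply: leq_trans (subset_leq_card H1) _; apply: leq_trans (cardsU_le _ _) _.
  case: b Hb {H1} => [/(_ isT) /and3P [_ _ Mv]|_] /=.
    case: eqP => [->|_]; first by rewrite cards1 addn1.
    by rewrite cards0 addn0; apply: dM.
  by rewrite cards0 addn0; apply: dM.
- rewrite cardsU_disj; last first.
    move=> f Hf; case: b {Hb} => /=; last by rewrite inE.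
    rewrite inE; apply/negP => /eqP fvw; subst f.
    by move: Hf; rewrite in_setU in_setD (negbTE vwF) orbF vwE.
  rewrite cardsU_disj; last by move=> f /setDP [_ /negP fE]; apply/negP => /FE.
  by case: b {Hb}; rewrite ?cards1 ?cards0 ?addn0.
- move=> x.
  have vxF : [set v; x] \notin F.
    by apply/negP => /(subsetP sF); apply/negP; apply: notin_edgesC.
  have vxC : [set v; x] \notin edges_in e (comp_del e v w).
    exact: notin_edgesC.
  rewrite !in_setU in_setD EwE (negbTE vxF) (negbTE vxC) orbF /=.
  have E : ([set v; x] == [set v; w]) = (x == w).
    by apply/eqP/eqP => [/set2_inj|->].
  case: b {Hb} => /=; rewrite ?in_set1 ?in_set0 ?orbF E;
    case: (x == w); rewrite /= ?orbT ?orbF //.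
Qed.

End D.


Section E.
Variables (V : finType) (e : rel V) (v : V).
Hypothesis esym : symmetric e.
Hypothesis eirr : irreflexive e.
Hypothesis etree : is_tree e.

Definition vsatb (S : {set V}) w :=
  [forall F : {set {set V}}, max_2matching e S F ==> (deg_in F w == 2)].

Lemma vsatP S w : reflect (vsaturated e S w) (vsatb S w).
Proof.
apply: (iffP forallP) => [H F HF|H F]; first by apply/eqP; move: (H F); rewrite HF.
by apply/implyP => /H ->.
Qed.

Definition U := [set w | e v w && ~~ vsatb (comp_del e v w) w].
Definition SS := [set: V] :\ v.

Lemma deg_sub (M M' : {set {set V}}) x : M' \subset M -> deg_in M' x <= deg_in M x.
Proof.
move=> s; apply: subset_leq_card; apply/subsetP => f; rewrite !inE => /andP [fM ->].
by rewrite (subsetP s).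
Qed.

Lemma sub2m (S S' : {set V}) (M M' : {set {set V}}) :
  is_2matching e S M -> M' \subset M -> M' \subset edges_in e S' -> is_2matching e S' M'.
Proof.
move=> /andP [_ /forallP dM] sMM sM'; apply/andP; split => //.
by apply/forallP => x; apply: leq_trans (deg_sub x sMM) (dM x).
Qed.

Lemma T2S (S : {set V}) F : is_2matching e S F -> is_2matching e [set: V] F.
Proof.
move=> H; have [sH _] := andP H; apply: sub2m H (subxx _) _.
by apply: subset_trans sH _; apply: edges_mono; apply: subsetT.
Qed.

Lemma bad_step (M : {set {set V}}) w : is_2matching e [set: V] M ->
  [set v; w] \in M -> w \notin U ->
  exists M', [/\ is_2matching e [set: V] M', #|M| <= #|M'| &
     forall x, ([set v; x] \in M') = (if x == w then false else [set v; x] \in M)].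
Proof.
move=> HM vwM wU.
have evw : e v w := edge_vw esym eirr (subsetP (proj1 (andP HM)) _ vwM).
have wsat : vsatb (comp_del e v w) w by move: wU; rewrite inE evw /= negbK.
have [F /andP [HF /eqP nF]] := nu2_max e (comp_del e v w).
have [H1 H2 H3] := exch esym eirr etree (b := false) evw HM HF (fun x => False_ind _ (notF x)).
exists ((M :\: Ew e v w) :|: F :|: set0); split => //.
rewrite H2 addn0 -(cardsID (Ew e v w) M).
set K := M :&: edges_in e (comp_del e v w).
have HK : is_2matching e (comp_del e v w) K.
  by apply: sub2m HM (subsetIl _ _) (subsetIr _ _).
have -> : M :&: Ew e v w = [set [set v; w]] :|: K.
  apply/setP => f; rewrite /K in_setU !in_setI in_set1 EwE.
  by case: (eqVneq f [set v; w]) => [->|fn] /=; rewrite ?vwM ?orbT ?orbF.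
rewrite cardsU_disj; last first.
  move=> f; rewrite in_set1 => /eqP ->; rewrite /K in_setI negb_and; apply/orP; right.
  exact: notin_edgesC.
rewrite cards1 addnC leq_add2l add1n.
have dK : deg_in K w <= 1.
  case/andP: HM => _ /forallP /(_ w) dM.
  rewrite -ltnS; apply: leq_trans dM; rewrite -addn1 -(cards1 [set v; w]).
  rewrite /deg_in -cardsU_disj; last first.
    move=> f; rewrite in_set /K in_setI => /andP [/andP [_ fE] _]; rewrite in_set1; apply/negP => /eqP fvw.
    by rewrite fvw (negbTE (notin_edgesC eirr w evw)) in fE.
  apply: subset_leq_card; apply/subsetP => f; rewrite !inE.
  by case/orP => [/andP [/andP [-> _] ->]|/eqP ->]; rewrite // vwM !inE eqxx orbT.
rewrite ltn_neqAle nF (nu2_ge HK) andbT; apply/negP => /eqP Ke.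
have : max_2matching e (comp_del e v w) K by rewrite /max_2matching HK Ke eqxx.
move: wsat => /vsatP /[apply] Kw.
by rewrite Kw in dK.
Qed.

Lemma LB n : forall M : {set {set V}}, is_2matching e [set: V] M ->
  #|[set w | ([set v; w] \in M) && (w \notin U)]| = n ->
  #|M| <= nu2 e SS + #|[set w in U | [set v; w] \in M]|.
Proof.
elim: n => [|n IH] M HM Hn.
  set Mm := [set f in M | v \notin f].
  have HMm : is_2matching e SS Mm.
    eapply sub2m; first exact: HM; first by apply/subsetP => f; rewrite inE => /andP [].
    apply/subsetP => f; rewrite inE => /andP [fM vf].
    case/edgesP: (subsetP (proj1 (andP HM)) _ fM) => a [b [fab eab _ _]].
    apply/edgesP; exists a, b; split => //; rewrite !inE andbT.
      by apply/negP => /eqP av; move: vf; rewrite fab av !inE eqxx.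
    by apply/negP => /eqP bv; move: vf; rewrite fab bv !inE eqxx orbT.
  rewrite -(cardsID [set f : {set V} | v \in f] M).
  have -> : M :\: [set f : {set V} | v \in f] = Mm by apply/setP => f; rewrite !inE andbC.
  rewrite addnC leq_add ?nu2_ge //.
  have -> : M :&: [set f : {set V} | v \in f] = [set f in M | v \in f] by rewrite setIdE.
  rewrite -/(deg_in M v) (deg_vert v (proj1 (andP HM))).
  apply: subset_leq_card; apply/subsetP => x; rewrite in_set => Hx; rewrite in_set Hx andbT.
  apply/negPn/negP => xU.
  have : x \in [set w | ([set v; w] \in M) && (w \notin U)] by rewrite in_set Hx xU.
  by move/eqP: Hn; rewrite cards_eq0 => /eqP ->; rewrite inE.
have : 0 < #|[set w | ([set v; w] \in M) && (w \notin U)]| by rewrite Hn.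
move=> /card_gt0P [w]; rewrite in_set => /andP [vwM wU].
have [M' [HM' MM' H3]] := bad_step HM vwM wU.
apply: leq_trans MM' _.
have -> : [set w0 in U | [set v; w0] \in M] = [set w0 in U | [set v; w0] \in M'].
  apply/setP => x; rewrite 2!in_set H3; case: eqP => // ->.
  by rewrite (negbTE wU).
apply: IH => //.
have -> : [set w0 | ([set v; w0] \in M') && (w0 \notin U)] =
          [set w0 | ([set v; w0] \in M) && (w0 \notin U)] :\ w.
  apply/setP => x; rewrite in_setD1 2!in_set H3; case: eqP => //=.
by move: Hn; rewrite (cardsD1 w) in_set vwM wU => [[]].
Qed.

Lemma vnS : v \notin SS.
Proof. by rewrite !inE eqxx. Qed.

Lemma LA (s : seq V) : uniq s -> {subset s <= U} -> size s <= 2 ->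
  exists M, [/\ is_2matching e [set: V] M, nu2 e SS + size s <= #|M| &
    forall x, ([set v; x] \in M) = (x \in s)].
Proof.
elim: s => [|w s IH] /=.
  move=> _ _ _; have [N /andP [HN /eqP nN]] := nu2_max e SS.
  exists N; split; first exact: T2S HN.
    by rewrite nN addn0.
  move=> x; rewrite in_nil; apply/negP => /(subsetP (proj1 (andP HN))) H.
  by have := @edges_mem _ e _ _ v H; rewrite in_set2 eqxx (negbTE vnS) => /(_ isT).
move=> /andP [ws us] sU sz.
have [M' [HM' sM' H3]] := IH us (fun x xs => sU x (mem_behead (s := w :: s) xs)) (ltnW sz).
have := sU w (mem_head _ _); rewrite in_set => /andP [evw /forallPn [F]].
rewrite negb_imply => /andP [/andP [HF /eqP nF] Fw].
have dFw : deg_in F w <= 1.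
  by case/andP: HF => _ /forallP /(_ w); rewrite leq_eqVlt (negbTE Fw) /=.
have Hb : true -> [&& deg_in F w <= 1, [set v; w] \notin M' & deg_in M' v <= 1].
  move=> _; rewrite dFw H3 ws /= (deg_vert v (proj1 (andP HM'))).
  have -> : [set x | [set v; x] \in M'] = [set x in s] by apply/setP => x; rewrite !inE H3.
  by rewrite cardsE (card_uniqP us) -ltnS.
have [H1 H2 H4] := exch esym eirr etree (b := true) evw HM' HF Hb.
eexists; split; first exact: H1.
  rewrite H2 addnS addn1 ltnS; apply: leq_trans sM' _.
  rewrite -(cardsID (Ew e v w) M') addnC leq_add2l.
  have -> : M' :&: Ew e v w = M' :&: edges_in e (comp_del e v w).
    apply/setP => f; rewrite !in_setI EwE.
    case: (eqVneq f [set v; w]) => [->|] /=; last by rewrite orbF.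
    by rewrite H3 (negbTE ws).
  rewrite nF; apply: nu2_ge; eapply sub2m; first exact: HM'.
    exact: subsetIl. exact: subsetIr.
by move=> x; rewrite H4 in_cons; case: eqP.
Qed.

End E.


Unset Implicit Arguments. Set Strict Implicit.

Theorem lemma2p5 (V : finType) (e : rel V) (v : V) :
  symmetric e -> irreflexive e -> is_tree e ->
  let d := nu2 e [set: V] - nu2 e ([set: V] :\ v) in
  [/\ nu2 e ([set: V] :\ v) <= nu2 e [set: V], d <= 2,
      (d = 2 <-> vsaturated e [set: V] v),
      (d = 1 <-> exists wj, e v wj /\ esaturated e [set: V] [set v; wj] /\
                  (forall wi, e v wi -> wi != wj ->
                     vsaturated e (comp_del e v wi) wi))
    & (d = 0 <-> forall wi, e v wi -> vsaturated e (comp_del e v wi) wi)].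
Proof.
move=> esym eirr etree; cbv zeta.
have eS : [set: V] :\ v = SS v by [].
rewrite eS.
set mu := nu2 e (SS v); set nu := nu2 e [set: V].
set UU := U e v.
set k := minn 2 #|UU|.
set s0 := take 2 (enum UU).
have s0u : uniq s0 by apply: take_uniq; apply: enum_uniq.
have s0U : {subset s0 <= UU} by move=> x /mem_take; rewrite mem_enum.
have s0k : size s0 = k by rewrite /s0 size_take -cardE /k /minn.
have s02 : size s0 <= 2 by rewrite s0k /k geq_minl.
have [M0 [HM0 szM0 H0]] := LA esym eirr etree s0u s0U s02.
have M0nu : #|M0| <= nu by apply: nu2_ge.
have F3 : forall M, is_2matching e [set: V] M ->
    #|M| <= mu + #|[set w in UU | [set v; w] \in M]| /\
    #|[set w in UU | [set v; w] \in M]| <= minn (deg_in M v) #|UU|.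
  move=> M HM; split; first exact: (LB esym eirr etree HM erefl).
  rewrite leq_min; apply/andP; split.
    rewrite (deg_vert v (proj1 (andP HM))); apply: subset_leq_card.
    by apply/subsetP => x; rewrite in_set => /andP [_ Hx]; rewrite in_set.
  by apply: subset_leq_card; apply/subsetP => x; rewrite in_set => /andP [].
have [Mx /andP [HMx /eqP nMx]] := nu2_max e [set: V].
have nMx2 : #|Mx| = nu by [].
have degle : forall M, is_2matching e [set: V] M -> deg_in M v <= 2.
  by move=> M /andP [_ /forallP].
have hd : nu = mu + k.
  apply/eqP; rewrite eqn_leq; apply/andP; split; last by rewrite -s0k; apply: leq_trans szM0 M0nu.
  have [h1 h2] := F3 _ HMx; rewrite -nMx2; apply: leq_trans h1 _; rewrite leq_add2l.
  apply: leq_trans h2 _; rewrite /k; have := degle _ HMx; lia.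
have hk : nu - mu = k by rewrite hd addKn.
have M0max : max_2matching e [set: V] M0.
  by rewrite /max_2matching HM0 -/nu eqn_leq M0nu /= hd -s0k.
have degM0 : deg_in M0 v = k.
  rewrite (deg_vert v (proj1 (andP HM0))) -s0k -(card_uniqP s0u) -cardsE.
  by apply: eq_card => x; rewrite !in_set H0.
have goodmax : forall M, max_2matching e [set: V] M ->
    k <= #|[set w in UU | [set v; w] \in M]|.
  move=> M /andP [HM /eqP nM]; have [h1 _] := F3 _ HM.
  by move: h1; rewrite nM -/nu hd leq_add2l.
rewrite hk; split.
- by rewrite hd leq_addr.
- by rewrite /k geq_minl.
- split.
    move=> k2 M HM; apply/eqP; rewrite eqn_leq degle ?(proj1 (andP HM)) //=.
    have [_ h2] := F3 _ (proj1 (andP HM)); have := goodmax _ HM.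
    rewrite k2 => h3; have := leq_trans h3 h2; rewrite leq_min => /andP [] //.
  by move=> Hs; rewrite -degM0; apply: Hs.
- split.
    move=> k1.
    have : #|UU| == 1 by move: k1; rewrite /k; lia.
    move=> /cards1P [wj Uwj].
    have wjU : wj \in UU by rewrite Uwj in_set1.
    exists wj; split; first by move: wjU; rewrite in_set => /andP [].
    split.
      move=> M HM; have := goodmax _ HM; rewrite k1 => /card_gt0P [x].
      by rewrite in_set Uwj in_set1 => /andP [/eqP <-].
    move=> wi evi nwi; apply/vsatP; move: nwi; apply: contraNT => nsat.
    have : wi \in UU by rewrite in_set evi.
    by rewrite Uwj in_set1.
  move=> [wj [evj [esj Hi]]].
  have wjU : wj \in UU.
    by apply: s0U; rewrite -H0; apply: esj.
  have sub : UU \subset [set wj].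
    apply/subsetP => x xU; rewrite in_set1; apply/negPn/negP => xj.
    move: xU; rewrite in_set => /andP [evx /negP []]; apply/vsatP; exact: Hi.
  have c1 : #|UU| <= 1 by rewrite -(cards1 wj); apply: subset_leq_card.
  have c0 : 0 < #|UU| by apply/card_gt0P; exists wj.
  by rewrite /k; lia.
- split.
    move=> k0 wi evi; apply/vsatP; apply/negPn/negP => ns.
    have c0 : 0 < #|UU| by apply/card_gt0P; exists wi; rewrite in_set evi.
    by move: k0; rewrite /k; lia.
  move=> Hall.
  have : #|UU| = 0.
    apply/eqP; rewrite cards_eq0; apply/eqP/setP => x; rewrite in_set0 in_set.
    by apply/negP => /andP [evx /negP []]; apply/vsatP; apply: Hall.
  by rewrite /k; lia.
Qed.
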